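(* Let $\sim$ be a right congruence on $\Sigma^*$ of finite index and let $\approx$ be its suffix expansion. Then $|\Sigma^{\le n}/{\approx}|$ is polynomially bounded in $n$ if and only if $\sim$ has no critical tuple.
   Context: A right congruence on $\Sigma^*$ is an equivalence $\sim$ with $x\sim y\Rightarrow xz\sim yz$ for all $z$. Its suffix expansion $\approx$ is defined by $a_1\cdots a_n\approx b_1\cdots b_m$ iff $n=m$ and $a_i\cdots a_n\sim b_i\cdots b_n$ for all $1\le i\le n$. A critical tuple in $\sim$ is a tuple $(u_2,v_2,u,v)$ of words with $|u_2|=|v_2|\ge1$, $u=u_1u_2$ and $v=v_1v_2$ for some words $u_1,v_1$, and $u_2w\not\sim v_2w$ for all $w\in\{u,v\}^*$. *)

(* Defs.v *)
From mathcomp Require Import all_boot.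
Set Implicit Arguments. Unset Strict Implicit. Unset Printing Implicit Defensive.

Section Defs.
Variable S : finType.
Implicit Types (sim : rel (seq S)).

Definition equivalence_rel sim : Prop :=
  [/\ forall x, sim x x,
      forall x y, sim x y -> sim y x &
      forall x y z, sim x y -> sim y z -> sim x z].

Definition right_congruence sim : Prop :=
  equivalence_rel sim /\ forall x y z, sim x y -> sim (x ++ z) (y ++ z).

Definition finite_index sim : Prop :=
  exists reps : seq (seq S), forall w, exists2 r, r \in reps & sim w r.

Definition suffix_expansion sim : rel (seq S) :=
  fun a b => (size a == size b) &&
             all (fun i => sim (drop i a) (drop i b)) (iota 0 (size a)).

Definition words_of_len (m : nat) : seq (seq S) :=
  [seq tval t | t <- enum {: m.-tuple S}].
Definition words_upto (n : nat) : seq (seq S) :=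
  flatten [seq words_of_len m | m <- iota 0 n.+1].

Definition num_classes (r : rel (seq S)) (W : seq (seq S)) : nat :=
  size (undup [seq [seq y <- W | r x y] | x <- W]).

Definition in_star2 (u v w : seq S) : Prop :=
  exists ws : seq (seq S),
    all (fun x => (x == u) || (x == v)) ws /\ w = flatten ws.

Definition critical_tuple sim (u2 v2 u v : seq S) : Prop :=
  [/\ size u2 = size v2, 1 <= size u2,
      exists u1, u = u1 ++ u2,
      exists v1, v = v1 ++ v2 &
      forall w, in_star2 u v w -> ~~ sim (u2 ++ w) (v2 ++ w)].

Definition has_critical_tuple sim : Prop :=
  exists u2 v2 u v, critical_tuple sim u2 v2 u v.

Definition poly_bounded (f : nat -> nat) : Prop :=
  exists c k : nat, forall n, f n <= c * n.+1 ^ k.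

End Defs.

(* Main.v *)
Require Import Defs.
From mathcomp Require Import all_boot.
Set Implicit Arguments. Unset Strict Implicit. Unset Printing Implicit Defensive.

Definition idx (S : finType) (sim : rel (seq S)) (reps : seq (seq S)) (x : seq S) : nat :=
  find (sim x) reps.

Definition code (S : finType) (sim : rel (seq S)) (reps : seq (seq S)) (s : seq S)
  : {ffun 'I_(size reps) -> 'I_(size reps).+1} :=
  [ffun i : 'I_(size reps) => inord (idx sim reps (nth [::] reps i ++ s))].

Lemma idx_lt (S : finType) (sim : rel (seq S)) reps x :
  (forall w, exists2 r, r \in reps & sim w r) -> idx sim reps x < size reps.
Proof.
move=> fi; rewrite /idx -has_find; case: (fi x) => r rin hr.
by apply/hasP; exists r.
Qed.

Lemma idx_sim (S : finType) (sim : rel (seq S)) reps x :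
  (forall w, exists2 r, r \in reps & sim w r) -> sim x (nth [::] reps (idx sim reps x)).
Proof.
move=> fi; rewrite /idx; apply: nth_find; case: (fi x) => r rin hr.
by apply/hasP; exists r.
Qed.

Lemma idx_eq (S : finType) (sim : rel (seq S)) reps x y :
  Defs.equivalence_rel sim -> sim x y -> idx sim reps x = idx sim reps y.
Proof.
move=> -[rf sy tr] hxy; rewrite /idx; apply: eq_find => r.
apply/idP/idP => h; [exact: (tr _ _ _ (sy _ _ hxy) h) | exact: (tr _ _ _ hxy h)].
Qed.

Lemma code_eqv (S : finType) (sim : rel (seq S)) reps s s' :
  right_congruence sim -> (forall w, exists2 r, r \in reps & sim w r) ->
  code sim reps s = code sim reps s' -> forall p, sim (p ++ s) (p ++ s').
Proof.
move=> [[rf sy tr] rc] fi hc p.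
case: (fi p) => r rin hr.
have ilt : index r reps < size reps by rewrite index_mem.
have := congr1 (fun f : {ffun 'I_(size reps) -> 'I_(size reps).+1} => val (f (Ordinal ilt))) hc; rewrite /code !ffunE /=.
rewrite nth_index // !inordK; try by rewrite ltnS ltnW // idx_lt.
move=> he.
have h1 := idx_sim (r ++ s) fi; have h2 := idx_sim (r ++ s') fi.
rewrite he in h1.
exact: (tr _ _ _ (rc _ _ s hr) (tr _ _ _ h1 (sy _ _ (tr _ _ _ (rc _ _ s' hr) h2)))).
Qed.

Lemma eqv_code (S : finType) (sim : rel (seq S)) reps s s' :
  right_congruence sim ->
  (forall p, sim (p ++ s) (p ++ s')) -> code sim reps s = code sim reps s'.
Proof.
move=> [eq rc] h; apply/ffunP => i; rewrite !ffunE.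
by rewrite (@idx_eq _ _ _ _ _ eq (h _)).
Qed.

Lemma code_cat (S : finType) (sim : rel (seq S)) reps y s t :
  right_congruence sim -> (forall w, exists2 r, r \in reps & sim w r) ->
  code sim reps t = code sim reps s -> code sim reps (y ++ t) = code sim reps (y ++ s).
Proof.
move=> rc fi h; apply: eqv_code => // p; rewrite !catA; exact: code_eqv h _.
Qed.
Lemma loop_lemma (S : finType) (sim : rel (seq S)) reps :
  right_congruence sim -> (forall w, exists2 r, r \in reps & sim w r) ->
  ~ has_critical_tuple sim ->
  forall x x' s s', size x = size x' -> code sim reps s = code sim reps s' ->
  code sim reps (x ++ s) = code sim reps s ->
  code sim reps (x' ++ s') = code sim reps s' ->
  forall j, j < size x -> sim (drop j x ++ s) (drop j x' ++ s').
Proof.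
move=> rc fi nct x x' s s' hsz hss hx hx' j hj.
have [[rf sy tr] rcc] := rc.
case H: (sim _ _) => //; exfalso; apply: nct.
exists (drop j x), (drop j x'), x, x'; split.
- by rewrite !size_drop hsz.
- by rewrite size_drop subn_gt0.
- by exists (take j x); rewrite cat_take_drop.
- by exists (take j x'); rewrite cat_take_drop.
move=> w [ws [hall ->]]; apply/negP => hw.
have hws : code sim reps (flatten ws ++ s) = code sim reps s.
  elim: ws hall {hw} => [|y ws IH] //= /andP[hy hall].
  rewrite -catA (code_cat y rc fi (IH hall)).
  case/orP: hy => /eqP -> //.
  by rewrite (code_cat x' rc fi hss) hx'.
have e1 := code_eqv rc fi (code_cat (drop j x) rc fi hws) [::].
have e2 := code_eqv rc fi (code_cat (drop j x') rc fi hws) [::].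
have e3 := code_eqv rc fi hss (drop j x').
have hw' := rcc _ _ s hw; rewrite -!catA /= in hw' e1 e2.
move: H; rewrite (tr _ _ _ (sy _ _ e1) (tr _ _ _ hw' (tr _ _ _ e2 e3))) //.
Qed.
Definition Pk (S : finType) (sim : rel (seq S)) (reps : seq (seq S)) (w : seq S)
  (g : {ffun 'I_(size reps) -> 'I_(size reps).+1}) N (k : 'I_N.+1) : bool :=
  (k < size w) && (code sim reps (drop k w) == g).

Definition keyN (S : finType) (sim : rel (seq S)) (reps : seq (seq S)) N (w : seq S) :
  'I_N.+1 * {ffun {ffun 'I_(size reps) -> 'I_(size reps).+1} -> option ('I_N.+1 * 'I_N.+1)} :=
  (inord (size w),
   [ffun g => match [pick k | @Pk S sim reps w g N k] with
              | Some k0 => Some ([arg min_(k < k0 | @Pk S sim reps w g N k) (k : nat)],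
                                 [arg max_(k > k0 | @Pk S sim reps w g N k) (k : nat)])
              | None => None end]).

Lemma key_se (S : finType) (sim : rel (seq S)) reps :
  right_congruence sim -> (forall w, exists2 r, r \in reps & sim w r) ->
  ~ has_critical_tuple sim ->
  forall N w w', size w <= N -> size w' <= N -> keyN sim reps N w = keyN sim reps N w' ->
  suffix_expansion sim w w'.
Proof.
move=> rc fi nct N w w' hw hw' hk.
have hsz : size w = size w'.
  by have := congr1 (fun K => val K.1) hk; rewrite /= !inordK // ltnS.
rewrite /suffix_expansion hsz eqxx /= -hsz; apply/allP => i; rewrite mem_iota add0n => /andP[_ hiw].
set g := code sim reps (drop i w).
have hk2 : (keyN sim reps N w).2 g = (keyN sim reps N w').2 g by rewrite hk.
rewrite /= !ffunE in hk2.
have iN : i < N.+1 by rewrite ltnS (leq_trans (ltnW hiw)).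
have Pi : @Pk S sim reps w g N (inord i) by rewrite /Pk inordK // hiw eqxx.
case: pickP hk2 => [k0 Pk0|/(_ (inord i))]; last by rewrite Pi.
case: pickP => [k0' Pk0'|//].
case: (arg_minnP (fun k : 'I_N.+1 => nat_of_ord k) Pk0) => lo Plo minlo.
case: (arg_maxnP (fun k : 'I_N.+1 => nat_of_ord k) Pk0) => hi Phi maxhi.
case: (arg_minnP (fun k : 'I_N.+1 => nat_of_ord k) Pk0') => lo' Plo' _.
case: (arg_maxnP (fun k : 'I_N.+1 => nat_of_ord k) Pk0') => hi' Phi' _.
case=> elo ehi; subst lo' hi'.
have lo_i : lo <= i by have := minlo _ Pi; rewrite inordK.
have i_hi : i <= hi by have := maxhi _ Pi; rewrite inordK.
move: Plo Phi Plo' Phi'; rewrite /Pk.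
move=> /andP[lw /eqP clw] /andP[rw /eqP crw] /andP[lw' /eqP clw'] /andP[rw' /eqP crw'].
have lr : lo <= hi := leq_trans lo_i i_hi.
set l := nat_of_ord lo in lw clw lw' clw' lo_i lr *.
set r := nat_of_ord hi in rw crw rw' crw' i_hi lr *.
set x := take (r - l) (drop l w).
set x' := take (r - l) (drop l w').
have dl : drop l w = x ++ drop r w.
  by rewrite -{1}(cat_take_drop (r - l) (drop l w)) drop_drop subnK.
have dl' : drop l w' = x' ++ drop r w'.
  by rewrite -{1}(cat_take_drop (r - l) (drop l w')) drop_drop subnK.
have sx : size x = r - l.
  by rewrite size_takel // size_drop leq_sub2r // ltnW.
have sx' : size x' = r - l.
  by rewrite size_takel // size_drop leq_sub2r // ltnW.
have hss : code sim reps (drop r w) = code sim reps (drop r w') by rewrite crw crw'.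
case: (ltngtP i r) i_hi => // [ir _|ei _]; last first.
  rewrite ei; exact: (code_eqv rc fi hss [::]).
have jx : i - l < size x by rewrite sx ltn_sub2r // (leq_ltn_trans lo_i).
have h1 : code sim reps (x ++ drop r w) = code sim reps (drop r w) by rewrite -dl clw crw.
have h2 : code sim reps (x' ++ drop r w') = code sim reps (drop r w') by rewrite -dl' clw' crw'.
have := loop_lemma rc fi nct (etrans sx (esym sx')) hss h1 h2 jx.
have jx' : i - l < size x' by rewrite sx' -sx.
have e1 : drop i w = drop (i - l) x ++ drop r w.
  by rewrite -{1}(subnK lo_i) -drop_drop dl drop_cat jx.
have e2 : drop i w' = drop (i - l) x' ++ drop r w'.
  by rewrite -{1}(subnK lo_i) -drop_drop dl' drop_cat jx'.
by rewrite e1 e2.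
Qed.
Lemma se_sym (S : finType) (sim : rel (seq S)) :
  right_congruence sim -> forall x y, suffix_expansion sim x y -> suffix_expansion sim y x.
Proof.
move=> [[rf sy tr] _] x y /andP[/eqP e /allP h]; apply/andP; split; first by rewrite e.
by apply/allP => i; rewrite -e => /h /sy.
Qed.

Lemma se_trans (S : finType) (sim : rel (seq S)) :
  right_congruence sim -> forall x y z, suffix_expansion sim x y ->
  suffix_expansion sim y z -> suffix_expansion sim x z.
Proof.
move=> [[rf sy tr] _] x y z /andP[/eqP e /allP h] /andP[/eqP e' /allP h'].
apply/andP; split; first by rewrite e e'.
apply/allP => i hi; apply: (tr _ _ _ (h _ hi)); apply: h'; by rewrite -e.
Qed.

Lemma se_refl (S : finType) (sim : rel (seq S)) :
  right_congruence sim -> forall x, suffix_expansion sim x x.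
Proof.
move=> [[rf sy tr] _] x; apply/andP; split => //; by apply/allP => i _.
Qed.

Lemma num_classes_le (S : finType) (T : finType) (r : rel (seq S)) W (key : seq S -> T) :
  (forall x y, r x y -> r y x) -> (forall x y z, r x y -> r y z -> r x z) ->
  (forall x y, x \in W -> y \in W -> key x = key y -> r x y) ->
  num_classes r W <= #|T|.
Proof.
move=> sy tr hk.
pose cls x := [seq z <- W | r x z].
pose g t := cls (head [::] [seq x <- W | key x == t]).
rewrite /num_classes cardT -(size_map g).
apply: uniq_leq_size; first exact: undup_uniq.
move=> c; rewrite mem_undup => /mapP[y yW ->].
have -> : [seq y0 <- W | r y y0] = g (key y).
  rewrite /g /cls.
  set L := [seq x <- W | key x == key y].
  have yL : y \in L by rewrite mem_filter eqxx.
  have : head [::] L \in L by move: yL; case: L => // z l _; rewrite mem_head.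
  move: (head [::] L) => z; rewrite mem_filter => /andP[/eqP kz zW].
  have hzy := hk z y zW yW kz.
  apply: eq_in_filter => t _; apply/idP/idP => h.
    exact: (tr _ _ _ hzy h).
  exact: (tr _ _ _ (sy _ _ hzy) h).
by apply: map_f; rewrite mem_enum.
Qed.
Lemma words_upto_size (S : finType) n w : w \in words_upto S n -> size w <= n.
Proof.
rewrite /words_upto => /flatten_mapP[m]; rewrite mem_iota add0n ltnS => hm.
by rewrite /words_of_len => /mapP[t _ ->]; rewrite size_tuple.
Qed.

Lemma mem_words_upto (S : finType) n (w : seq S) : size w <= n -> w \in words_upto S n.
Proof.
move=> hw; apply/flatten_mapP; exists (size w); first by rewrite mem_iota add0n ltnS.
by apply/mapP; exists (in_tuple w); rewrite ?mem_enum.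
Qed.

Lemma exp_mono m n e : m <= n -> m ^ e <= n ^ e.
Proof. by case: e => [|e] // h; rewrite leq_exp2r. Qed.

Lemma card_bound n D : n.+1 * (n.+1 * n.+1).+1 ^ D <= 2 ^ D * n.+1 ^ (2 * D + 1).
Proof.
have h : (n.+1 * n.+1).+1 <= 2 * n.+1 ^ 2.
  by rewrite mul2n -addnn -add1n leq_add2r muln_gt0.
apply: (leq_trans (leq_mul (leqnn _) (exp_mono D h))).
rewrite expnMn -expnM expnD expn1 mulnC -mulnA.
by rewrite [2 ^ D * _]mulnC -mulnA mulnC.
Qed.

Lemma poly_dir (S : finType) (sim : rel (seq S)) :
  right_congruence sim -> finite_index sim -> ~ has_critical_tuple sim ->
  poly_bounded (fun n => num_classes (suffix_expansion sim) (words_upto S n)).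
Proof.
move=> rc [reps fi] nct.
pose D := #|{ffun 'I_(size reps) -> 'I_(size reps).+1}|.
exists (2 ^ D), (2 * D + 1) => n.
apply: leq_trans (num_classes_le (key := keyN sim reps n) (se_sym rc) (se_trans rc) _) _.
  move=> x y hx hy; apply: key_se => //; exact: words_upto_size.
rewrite card_prod card_ord card_ffun card_option card_prod card_ord -/D.
exact: card_bound.
Qed.
From mathcomp Require Import zify.

Lemma exp_beats c k : exists m, c * m.+1 ^ k < 2 ^ m.
Proof.
pose t := c + k + 1; pose j := 3 * t.
exists (2 ^ j).-1.
rewrite prednK ?expn_gt0 // -expnM.
have hc : c < 2 ^ c := ltn_expl c (isT : 1 < 2).
have h1 : c * 2 ^ (j * k) < 2 ^ (c + j * k).
  by rewrite expnD ltn_pmul2r ?expn_gt0.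
apply: (leq_trans h1); rewrite leq_exp2l //.
have hX : t < 2 ^ t := ltn_expl t (isT : 1 < 2).
have -> : 2 ^ j = 2 ^ t * 2 ^ t * 2 ^ t by rewrite /j !mulSn mul0n addn0 !expnD mulnA.
move: hX; set X := 2 ^ t => hX.
have hX3 : t.+1 * t.+1 * t.+1 <= X * X * X by rewrite !leq_mul.
rewrite -ltnS prednK; last by rewrite !muln_gt0 (leq_ltn_trans _ hX).
apply: leq_trans hX3; rewrite /j /t; nia.
Qed.
Fixpoint Wd (S : finType) (u v : seq S) (t : seq bool) : seq S :=
  match t with
  | [::] => [::]
  | b :: t' => Wd u v t' ++ (if b then v ++ u else u ++ v)
  end.

Lemma size_Wd (S : finType) (u v : seq S) t : size (Wd u v t) = size t * (size u + size v).
Proof.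
elim: t => [|b t IH] //=; case: b; rewrite !size_cat IH mulSn; lia.
Qed.

Lemma star_cat (S : finType) (u v z : seq S) (b : bool) :
  in_star2 u v z -> in_star2 u v ((if b then v ++ u else u ++ v) ++ z).
Proof.
move=> [ws [hall ->]].
case: b.
  by exists [:: v, u & ws]; rewrite /= hall !eqxx orbT /= catA.
by exists [:: u, v & ws]; rewrite /= hall !eqxx orbT /= catA.
Qed.

Lemma diff_blocks (S : finType) (sim : rel (seq S)) u2 v2 u v :
  critical_tuple sim u2 v2 u v ->
  forall p p' z, size p = size p' -> in_star2 u v z ->
  ~~ suffix_expansion sim (p ++ (v ++ u) ++ z) (p' ++ (u ++ v) ++ z).
Proof.
move=> [hs h1 [u1 eu] [v1 ev] hc] p p' z hp hz.
apply/negP => /andP[_ /allP h].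
have := h (size p + size v + size u1).
rewrite mem_iota add0n eu ev !size_cat.
have -> : p ++ ((v1 ++ v2) ++ u1 ++ u2) ++ z = (p ++ (v1 ++ v2) ++ u1) ++ (u2 ++ z) by rewrite !catA.
have -> : p' ++ ((u1 ++ u2) ++ v1 ++ v2) ++ z = (p' ++ (u1 ++ u2) ++ v1) ++ (v2 ++ z) by rewrite !catA.
rewrite !drop_size_cat ?size_cat; try lia.
move=> H; have := hc _ hz; rewrite H //; lia.
Qed.
Lemma Wd_distinct (S : finType) (sim : rel (seq S)) u2 v2 u v :
  right_congruence sim -> critical_tuple sim u2 v2 u v ->
  forall t t', size t = size t' -> t <> t' -> forall z, in_star2 u v z ->
  ~~ suffix_expansion sim (Wd u v t ++ z) (Wd u v t' ++ z).
Proof.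
move=> rc ct; elim=> [|b t IH] [|b' t'] //= hs hne z hz.
have hst : size t = size t' by case: hs.
rewrite -!catA; case: (b =P b') => [eb|nb].
  subst b'; apply: IH => //; [by move=> e; apply: hne; rewrite e | exact: star_cat].
have hW : size (Wd u v t) = size (Wd u v t') by rewrite !size_Wd hst.
case: b b' nb {hne} => [] [] // _.
  exact: (diff_blocks ct hW).
apply/negP => /(se_sym rc); apply/negP; exact: (diff_blocks ct (esym hW)).
Qed.

Lemma lower_bound (S : finType) (sim : rel (seq S)) u2 v2 u v :
  right_congruence sim -> critical_tuple sim u2 v2 u v ->
  forall m, 2 ^ m <= num_classes (suffix_expansion sim) (words_upto S (m * (size u + size v))).
Proof.
move=> rc ct m.
set W := words_upto S _.
pose cls x := [seq y <- W | suffix_expansion sim x y].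
pose s1 := [seq cls (Wd u v (val t)) | t <- enum {: m.-tuple bool}].
have -> : 2 ^ m = size s1 by rewrite size_map -cardT card_tuple card_bool.
rewrite /num_classes; apply: uniq_leq_size.
  rewrite map_inj_in_uniq ?enum_uniq // => t t' _ _ e.
  apply/val_inj/eqP; apply/negPn/negP => /eqP ne.
  have hin : Wd u v t \in cls (Wd u v t).
    by rewrite mem_filter se_refl // mem_words_upto // size_Wd size_tuple.
  rewrite e mem_filter in hin; case/andP: hin => hse _.
  have H : ~~ suffix_expansion sim (Wd u v t' ++ [::]) (Wd u v t ++ [::]).
    apply: (Wd_distinct rc ct); [by rewrite !size_tuple | by move=> e'; apply: ne | by exists [::]].
  by rewrite !cats0 hse in H.
move=> c /mapP[t _ ->]; rewrite mem_undup; apply: map_f.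
by rewrite mem_words_upto // size_Wd size_tuple.
Qed.
Theorem theorem18 (S : finType) (sim : rel (seq S)) :
  right_congruence sim -> finite_index sim ->
  (poly_bounded (fun n => num_classes (suffix_expansion sim) (words_upto S n))
   <-> ~ has_critical_tuple sim).
Proof.
move=> rc fi; split; last exact: poly_dir.
move=> [c [k hb]] [u2 [v2 [u [v ct]]]].
have L1 : 0 < size u + size v.
  by case: ct => _ h [u1 ->] _ _; rewrite size_cat; lia.
have [m hm] := exp_beats (c * (size u + size v) ^ k) k.
have h1 := lower_bound rc ct m.
have h2 := hb (m * (size u + size v)).
have h3 : c * (m * (size u + size v)).+1 ^ k <= c * (size u + size v) ^ k * m.+1 ^ k.
  rewrite -mulnA -expnMn leq_mul2l exp_mono ?orbT //; nia.
by have := leq_trans h1 (leq_trans h2 h3); rewrite leqNgt hm.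
Qed.
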